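(* Let $N\ge1$ and $K\ge4$ be integers and let $\gamma\in(0,1)$ satisfy $$\gamma\le\frac{1}{(F_{K+2}-3)(1+N/2)}.$$ Let $\mu_0,\sigma_0,\sigma\ge1$ satisfy $\frac{\sigma}{(\mu_0\sigma)^\gamma}\ge\sigma_0$, and define $$\lambda_k=\mu_0\sigma^{(F_{k+2}-2)+(F_{k+2}-3)N/2},\qquad \mu_k=\mu_0\sigma^{(F_{k+2}-2)+(F_{k+3}-3)N/2}\qquad(k=1,\dots,K-1),$$ $$\lambda_K=\mu_0\sigma^{(2F_K-2)+(F_{K+2}-3)N/2},\qquad \mu_K=\mu_0\sigma^{(2F_K-2)+(3F_K-3)N/2}.$$ Then the following conditions hold: $$\lambda_{k+1}^{1-\gamma}\ge\mu_k\sigma_0\ (k=0,\dots,K-1),\qquad \frac{\mu_1}{\lambda_1}\ge\Big(\frac{\lambda_1}{\mu_0}\Big)^N,$$ $$\frac{\mu_k}{\lambda_k}\ge\max\Big\{\Big(\frac{\lambda_k}{\mu_{k-1}}\frac{\lambda_{k-1}}{\mu_{k-2}}\Big)^{N/2},\ \frac{(\lambda_k/\mu_{k-1})^N(\lambda_{k-1}/\mu_{k-2})^{N/2}}{\mu_{k-1}/\lambda_{k-1}}\Big\}\quad(k=2,\dots,K-1),$$ $$\frac{\mu_K}{\lambda_K}\ge\max\Big\{\Big(\frac{\lambda_K}{\mu_{K-1}}\Big)^{N/2},\ \frac{(\lambda_K/\mu_{K-1})^N(\lambda_{K-1}/\mu_{K-2})^{N/2}}{\mu_{K-1}/\lamb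da_{K-1}}\Big\}.$$
   Context: $\{F_k\}_{k\ge0}$ is the Fibonacci sequence: $F_0=F_1=1$, $F_{k+2}=F_k+F_{k+1}$ for $k\ge0$. *)

(* Defs.v *)
From Stdlib Require Import Reals Lra Lia.
Open Scope R_scope.

(* Fibonacci with F_0 = F_1 = 1, F_{k+2} = F_k + F_{k+1}. *)
Fixpoint fib (k : nat) : nat :=
  match k with
  | O => 1%nat
  | S k' => match k' with
            | O => 1%nat
            | S k'' => (fib k'' + fib k')%nat
            end
  end.

Definition Fr (k : nat) : R := INR (fib k).

(* lambda_k for k = 1..K (value at other k is irrelevant). *)
Definition lam (N K : nat) (mu0 sigma : R) (k : nat) : R :=
  if Nat.eqb k K
  then mu0 * Rpower sigma ((2 * Fr K - 2) + (Fr (K + 2) - 3) * (INR N / 2))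
  else mu0 * Rpower sigma ((Fr (k + 2) - 2) + (Fr (k + 2) - 3) * (INR N / 2)).

Definition mu (N K : nat) (mu0 sigma : R) (k : nat) : R :=
  if Nat.eqb k 0 then mu0
  else if Nat.eqb k K
  then mu0 * Rpower sigma ((2 * Fr K - 2) + (3 * Fr K - 3) * (INR N / 2))
  else mu0 * Rpower sigma ((Fr (k + 2) - 2) + (Fr (k + 3) - 3) * (INR N / 2)).

(* Main.v *)
Require Import Defs.
From Stdlib Require Import Reals.
From Stdlib Require Import Lra Lia.
Open Scope R_scope.

Lemma Fr_SS k : Fr (S (S k)) = Fr k + Fr (S k).
Proof. unfold Fr. change (fib (S (S k))) with (fib k + fib (S k))%nat. apply plus_INR. Qed.

Lemma fib_step k : (fib k <= fib (S k))%nat.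
Proof. destruct k. simpl. lia. change (fib (S (S k))) with (fib k + fib (S k))%nat. lia. Qed.

Lemma fib_le m n : (m <= n)%nat -> (fib m <= fib n)%nat.
Proof. induction 1. lia. pose proof (fib_step m0). lia. Qed.

Lemma Fr_le m n : (m <= n)%nat -> Fr m <= Fr n.
Proof. intro H. unfold Fr. apply le_INR. now apply fib_le. Qed.

Lemma exp_le' x y : x <= y -> exp x <= exp y.
Proof. intros [H|H]. left; now apply exp_increasing. right; now subst. Qed.

Lemma ln_le' x y : 0 < x -> x <= y -> ln x <= ln y.
Proof. intros H [H1|H1]. left; now apply ln_increasing. right; now subst. Qed.

Lemma exp_div x y : exp x / exp y = exp (x - y).
Proof. unfold Rminus. rewrite exp_plus, exp_Ropp. reflexivity. Qed.

Lemma Rpower_exp x y : Rpower (exp x) y = exp (y * x).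
Proof. unfold Rpower. now rewrite ln_exp. Qed.

Lemma exp_pow x n : exp x ^ n = exp (INR n * x).
Proof.
  induction n. simpl. rewrite Rmult_0_l, exp_0. reflexivity.
  rewrite S_INR. simpl. rewrite IHn, <- exp_plus. f_equal. ring.
Qed.

Lemma base_exp mu0 sigma e : 0 < mu0 -> 0 < sigma ->
  mu0 * Rpower sigma e = exp (ln mu0 + e * ln sigma).
Proof. intros. unfold Rpower. rewrite exp_plus, exp_ln; auto. Qed.

Lemma lam_mid N K mu0 sigma k : 0 < mu0 -> 0 < sigma -> k <> K ->
  lam N K mu0 sigma k = exp (ln mu0 + ((Fr (k + 2) - 2) + (Fr (k + 2) - 3) * (INR N / 2)) * ln sigma).
Proof. intros. unfold lam. destruct (Nat.eqb_spec k K). lia. now apply base_exp. Qed.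

Lemma lam_K N K mu0 sigma : 0 < mu0 -> 0 < sigma ->
  lam N K mu0 sigma K = exp (ln mu0 + ((2 * Fr K - 2) + (Fr (K + 2) - 3) * (INR N / 2)) * ln sigma).
Proof. intros. unfold lam. rewrite Nat.eqb_refl. now apply base_exp. Qed.

Lemma mu_0 N K mu0 sigma : 0 < mu0 -> mu N K mu0 sigma 0 = exp (ln mu0).
Proof. intros. unfold mu. simpl. now rewrite exp_ln. Qed.

Lemma mu_mid N K mu0 sigma k : 0 < mu0 -> 0 < sigma -> k <> 0%nat -> k <> K ->
  mu N K mu0 sigma k = exp (ln mu0 + ((Fr (k + 2) - 2) + (Fr (k + 3) - 3) * (INR N / 2)) * ln sigma).
Proof. intros. unfold mu. destruct (Nat.eqb_spec k 0). lia. destruct (Nat.eqb_spec k K). lia. now apply base_exp. Qed.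

Lemma mu_K N K mu0 sigma : 0 < mu0 -> 0 < sigma -> K <> 0%nat ->
  mu N K mu0 sigma K = exp (ln mu0 + ((2 * Fr K - 2) + (3 * Fr K - 3) * (INR N / 2)) * ln sigma).
Proof. intros. unfold mu. destruct (Nat.eqb_spec K 0). lia. rewrite Nat.eqb_refl. now apply base_exp. Qed.

Lemma key a s g ls0 el em : 0 <= s -> g*(el-1) <= el-em-1 -> ls0 <= s - g*(a+s) ->
  a + em*s + ls0 <= (1-g)*(a+el*s).
Proof. intros. nra. Qed.

Lemma Fr2 : Fr 2 = 2. Proof. unfold Fr; simpl; lra. Qed.
Lemma Fr6 : Fr 6 = 13. Proof. unfold Fr; simpl; lra. Qed.

Ltac rwlm Pm Ps := repeat first [rewrite lam_K by first [assumption|lia] | rewrite mu_K by first [assumption|lia] | rewrite mu_0 by first [assumption|lia] | rewrite lam_mid by first [assumption|lia] | rewrite mu_mid by first [assumption|lia]].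
Ltac expn := repeat (rewrite ?exp_div, ?exp_pow, ?Rpower_exp, <- ?exp_plus).
Ltac nnorm := rewrite <- ?plus_n_Sm, <- ?plus_n_O in *.
Ltac frnorm := repeat rewrite Fr_SS; unfold Fr; simpl fib; simpl INR.

Theorem proposition5p1 (N K : nat) (gamma mu0 sigma0 sigma : R) :
  (1 <= N)%nat -> (4 <= K)%nat ->
  0 < gamma < 1 ->
  gamma <= 1 / ((Fr (K + 2) - 3) * (1 + INR N / 2)) ->
  1 <= mu0 -> 1 <= sigma0 -> 1 <= sigma ->
  sigma / Rpower (mu0 * sigma) gamma >= sigma0 ->
  let l := lam N K mu0 sigma in
  let m := mu N K mu0 sigma in
  (forall k : nat, (k <= K - 1)%nat ->
     Rpower (l (k + 1)%nat) (1 - gamma) >= m k * sigma0) /\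
  m 1%nat / l 1%nat >= (l 1%nat / mu0) ^ N /\
  (forall k : nat, (2 <= k <= K - 1)%nat ->
     m k / l k >=
     Rmax (Rpower (l k / m (k - 1)%nat * (l (k - 1)%nat / m (k - 2)%nat)) (INR N / 2))
          ((l k / m (k - 1)%nat) ^ N
             * Rpower (l (k - 1)%nat / m (k - 2)%nat) (INR N / 2)
             / (m (k - 1)%nat / l (k - 1)%nat))) /\
  m K / l K >=
  Rmax (Rpower (l K / m (K - 1)%nat) (INR N / 2))
       ((l K / m (K - 1)%nat) ^ N
          * Rpower (l (K - 1)%nat / m (K - 2)%nat) (INR N / 2)
          / (m (K - 1)%nat / l (K - 1)%nat)).
Proof.
  intros HN HK Hg Hgb Hm0 Hs0 Hs Hsig l m. unfold l, m. clear l m.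
  assert (Pm : 0 < mu0) by lra. assert (Ps : 0 < sigma) by lra.
  assert (s0 : 0 <= ln sigma) by (rewrite <- ln_1; apply ln_le'; lra).
  assert (Hsig' : ln sigma0 <= ln sigma - gamma * (ln mu0 + ln sigma)).
  { unfold Rpower in Hsig. rewrite ln_mult in Hsig by lra.
    rewrite <- (exp_ln sigma) in Hsig at 1 by lra. rewrite exp_div in Hsig.
    rewrite <- (ln_exp (ln sigma - _)). apply ln_le'; lra. }
  set (a := ln mu0) in *. set (s := ln sigma) in *.
  assert (Hn : 0 < INR N / 2) by (assert (1 <= INR N) by (apply (le_INR 1); lia); lra).
  assert (HgD : gamma * ((Fr (K + 2) - 3) * (1 + INR N / 2)) <= 1).
  { assert (13 <= Fr (K+2)) by (rewrite <- Fr6; apply Fr_le; lia).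
    assert (0 < (Fr (K + 2) - 3) * (1 + INR N / 2)) by nra.
    apply Rmult_le_compat_r with (r := (Fr (K + 2) - 3) * (1 + INR N / 2)) in Hgb; [|lra].
    unfold Rdiv in Hgb. rewrite Rmult_1_l, Rinv_l in Hgb; lra. }
  assert (FK6 : 13 <= Fr (K+2)) by (rewrite <- Fr6; apply Fr_le; lia).
  destruct K as [|[|[|[|J]]]]; try lia. clear HK.
  split; [|split; [|split]].
  - intros k Hk. assert (Ps0 : 0 < sigma0) by lra.
    rewrite <- (exp_ln sigma0 Ps0).
    destruct k as [|i].
    + rwlm Pm Ps. change (ln mu0) with a. change (ln sigma) with s.
      expn. apply Rle_ge, exp_le'. cbn [Nat.add]. frnorm.
      pose proof (key a s gamma (ln sigma0) 1 0 s0). lra.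
    + nnorm. destruct (Nat.eq_dec (S (S i)) (S (S (S (S J))))) as [E|E].
      * injection E as E. subst i.
        rwlm Pm Ps. change (ln mu0) with a. change (ln sigma) with s.
        expn. apply Rle_ge, exp_le'. nnorm.
        apply key; [assumption| |assumption].
        pose proof (Fr_SS (S (S (S (S J))))). pose proof (Fr_SS (S (S (S J)))).
        pose proof (Fr_SS (S (S J))). pose proof (Fr_le 2 (S (S J)) ltac:(lia)). pose proof (Fr_le 2 (S (S (S J))) ltac:(lia)). rewrite Fr2 in *.
        assert (0 <= gamma * (Fr (S (S (S (S (S (S J)))))) - 2 * Fr (S (S (S (S J)))))) by (apply Rmult_le_pos; lra).
        nra.
      * rwlm Pm Ps. change (ln mu0) with a. change (ln sigma) with s.
        expn. apply Rle_ge, exp_le'. nnorm.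
        apply key; [assumption| |assumption].
        pose proof (Fr_SS (S (S i))). pose proof (Fr_SS (S i)).
        pose proof (Fr_le 2 (S (S i)) ltac:(lia)). rewrite Fr2 in *.
        pose proof (Fr_le (S (S (S (S i)))) (S (S (S (S (S (S J)))))) ltac:(lia)).
        assert (0 <= gamma * ((Fr (S (S (S (S (S (S J)))))) - Fr (S (S (S (S i))))) * (1 + INR N / 2))) by (apply Rmult_le_pos; [lra|apply Rmult_le_pos; lra]).
        nra.
  - rwlm Pm Ps. change (ln mu0) with a. change (ln sigma) with s.
    assert (Ema : mu0 = exp a) by (unfold a; now rewrite exp_ln). rewrite Ema.
    expn. apply Rle_ge, exp_le'. cbn [Nat.add]. frnorm. apply Req_le; field.
  - intros k Hk. destruct k as [|[|j]]; try lia. cbn [Nat.sub]. rewrite Nat.sub_0_r.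
    destruct j as [|i].
    + rwlm Pm Ps. change (ln mu0) with a. change (ln sigma) with s.
      apply Rle_ge, Rmax_lub; expn; apply exp_le'; nnorm; frnorm; apply Req_le; field.
    + rwlm Pm Ps. change (ln mu0) with a. change (ln sigma) with s.
      apply Rle_ge, Rmax_lub; expn; apply exp_le'; nnorm; frnorm; apply Req_le; field.
  - cbn [Nat.sub]. rewrite ?Nat.sub_0_r. rwlm Pm Ps. change (ln mu0) with a. change (ln sigma) with s.
      apply Rle_ge, Rmax_lub; expn; apply exp_le'; nnorm; frnorm; apply Req_le; field.
Qed.
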